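(* Let $k\ge3$, let $G$ be a graph and $L$ a $k$-list assignment for $G$. Let $B$ be a bug in $G$ whose root $r$ has $d_G(r)=2$, and write $n=|V(G)|$. Then $B$ is safe in $G$ if at least one of the following holds: (i) there is no edge between $V(B)$ and $V(G)\setminus V(B)$; (ii) $3\le|V(B)|\le k$; (iii) $|V(B)|\ge5$; (iv) $|V(B)|=1$ and $n\not\equiv 0\pmod k$ and $n\not\equiv -1\pmod k$; (v) $|V(B)|=2$ and $n\not\equiv 0\pmod k$ and $n\not\equiv 1\pmod k$; (vi) $|V(B)|=4$, $k=3$ and $n\not\equiv0\pmod 3$.
   Context: $V_{3^+}(G)$ is the set of vertices of degree at least $3$ in $G$. A bug in $G$ is an induced connected subgraph $B$ together with a vertex $r\in V(B)$, its root, such that $V(B)\cap V_{3^+}(G)\subseteq\{r\}$. A $k$-list assignment $L$ assigns to each vertex $v$ a set $L(v)$ of exactly $k$ colors; an $L$-coloring is a proper vertex coloring $f$ with $f(v)\in L(v)$. For an integer $n$ and $k\ge1$, $n\bmod^* k$ is the unique $m\in\{1,\dots,k\}$ with $n\equiv m\pmod k$. If $|V(G)|=n\ge 1$, an $L$-coloring $f$ of $G$ is strongly equitable (SE) if every color class has at most $\lceil n/k\rceil$ vertices and the number of colors whose class has exactly $\lceil n/k\rceil$ vertices (the full classes) is at most $n\bmod^* k$; the empty graph is regarded as SE $L$-colorable. A subgraph $S\subseteq G$ is safe in $G$ if every SE $L$-coloring of $G-V(S)$ (with the restriction of $L$) can be extended to an SE $L$-coloring of $G$. *)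

(* Defs.v *)
From mathcomp Require Import all_boot.
Set Implicit Arguments. Unset Strict Implicit. Unset Printing Implicit Defensive.

Definition simple_graph (T : finType) (e : rel T) : Prop :=
  symmetric e /\ irreflexive e.

Definition deg (T : finType) (e : rel T) (v : T) : nat := #|[set u | e v u]|.

Definition list_assignment (T C : finType) (k : nat) (L : T -> {set C}) : Prop :=
  forall v, #|L v| = k.

Definition L_coloring (T C : finType) (e : rel T) (L : T -> {set C})
  (U : {set T}) (f : T -> C) : Prop :=
  (forall v, v \in U -> f v \in L v) /\
  (forall u v, u \in U -> v \in U -> e u v -> f u != f v).

Definition ceil_div (n k : nat) : nat := (n + k - 1) %/ k.
(* n mod* k for n >= 1: the unique m in {1..k} with n = m mod k *)
Definition modstar (n k : nat) : nat := (n - 1) %% k + 1.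

Definition color_class (T C : finType) (U : {set T}) (f : T -> C) (c : C) : {set T} :=
  [set v in U | f v == c].

Definition SE_coloring (T C : finType) (e : rel T) (k : nat) (L : T -> {set C})
  (U : {set T}) (f : T -> C) : Prop :=
  L_coloring e L U f /\
  (0 < #|U| ->
    (forall c, #|color_class U f c| <= ceil_div #|U| k) /\
    #|[set c | #|color_class U f c| == ceil_div #|U| k]| <= modstar #|U| k).

Definition safe (T C : finType) (e : rel T) (k : nat) (L : T -> {set C})
  (S : {set T}) : Prop :=
  forall f, SE_coloring e k L (~: S) f ->
    exists g, SE_coloring e k L setT g /\ forall v, v \notin S -> g v = f v.

Definition induced_connected (T : finType) (e : rel T) (S : {set T}) : Prop :=
  forall x y, x \in S -> y \in S ->
    connect [rel a b | [&& e a b, a \in S & b \in S]] x y.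

Definition bug (T : finType) (e : rel T) (S : {set T}) (r : T) : Prop :=
  [/\ r \in S, induced_connected e S &
      forall v, v \in S -> 3 <= deg e v -> v = r].

(* Main.v *)
Require Import Defs.
From mathcomp Require Import all_boot.
From mathcomp Require Import zify.
Set Implicit Arguments. Unset Strict Implicit. Unset Printing Implicit Defensive.

Lemma dk0 m k : m < k -> m %/ k = 0. Proof. exact: divn_small. Qed.
Lemma dk1 m k : k <= m < k + k -> m %/ k = 1.
Proof.
move=> /andP[H1 H2]. have Hk : 0 < k by lia.
have -> : m = k * 1 + (m - k) by lia.
rewrite mulnC divnMDl // divn_small //; lia.
Qed.

Lemma decomp N k : 0 < k -> exists q r, N = q * k + r /\ r < k /\ N %% k = r.
Proof. move=> Hk; exists (N %/ k), (N %% k); split; [exact: divn_eq | split => //]; exact: ltn_pmod. Qed.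

Ltac qsplit N k Hk := let q := fresh "q" in let r := fresh "r" in let E := fresh "E" in
  let Hr := fresh "Hr" in let Hm := fresh "Hm" in
  have [q [r [E [Hr Hm]]]] := decomp N Hk; rewrite Hm; rewrite {}E {Hm}.

Lemma ar_nw N k w : 0 < k -> N %% k != 0 -> N %% k + w <= k ->
  ceil_div (N + w) k = ceil_div N k /\ modstar (N + w) k = N %% k + w.
Proof.
move=> Hk; qsplit N k Hk => H0 H1; rewrite /ceil_div /modstar.
have -> : q * k + r + w + k - 1 = q * k + (r + w + k - 1) by lia.
have -> : q * k + r + k - 1 = q * k + (r + k - 1) by lia.
have -> : q * k + r + w - 1 = q * k + (r + w - 1) by lia.
rewrite !divnMDl // modnMDl dk1 ?dk1 ?modn_small; lia.
Qed.
Lemma ar_nw0 N k w : 0 < k -> N %% k = 0 -> 0 < w <= k ->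
  ceil_div (N + w) k = (ceil_div N k).+1 /\ modstar (N + w) k = w.
Proof.
move=> Hk; qsplit N k Hk => H0 H1; rewrite /ceil_div /modstar.
have -> : q * k + r + w + k - 1 = q * k + (r + w + k - 1) by lia.
have -> : q * k + r + k - 1 = q * k + (r + k - 1) by lia.
have -> : q * k + r + w - 1 = q * k + (r + w - 1) by lia.
rewrite !divnMDl // modnMDl dk1 ?dk0 ?modn_small; lia.
Qed.
Lemma ar_k N k : 0 < k ->
  ceil_div (N + k) k = (ceil_div N k).+1 /\ (0 < N -> modstar (N + k) k = modstar N k).
Proof.
move=> Hk; rewrite /ceil_div /modstar.
have -> : N + k + k - 1 = (N + k - 1) + 1 * k by lia.
rewrite divnDMl //; split; [lia|move=> HN].
have -> : N + k - 1 = 1 * k + (N - 1) by lia.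
by rewrite modnMDl.
Qed.
Lemma ar_ms N k : 0 < k -> N %% k != 0 -> modstar N k = N %% k.
Proof.
move=> Hk; qsplit N k Hk => H0; rewrite /modstar.
have -> : q * k + r - 1 = q * k + (r - 1) by lia.
rewrite modnMDl modn_small; lia.
Qed.
Lemma ar_c0 k : 0 < k -> ceil_div 0 k = 0.
Proof. by move=> Hk; rewrite /ceil_div add0n divn_small //; lia. Qed.

Lemma greedy (T C : finType) (k : nat) (L X : T -> {set C}) (y : T -> nat) (c0 : C) :
  (forall v, #|L v| = k) ->
  forall B : {set T},
  (forall v, v \in B -> #|X v| <= y v) ->
  (forall v, v \in B -> y v + #|[set u in B | y v <= y u]| <= k) ->
  exists h : T -> C, (forall v, v \in B -> h v \in L v /\ h v \notin X v) /\ {in B &, injective h}.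
Proof.
move=> HL B.
elim: {B}_.+1 {-2}B (ltnSn #|B|) => // m IH B HBm HX Hy.
have [B0|[x0 Hx0]] := set_0Vmem B.
  exists (fun _ => c0); split=> [v|u v]; by rewrite B0 inE.
pose v := [arg min_(u < x0 in B) y u].
have [Hv Hmin] : v \in B /\ forall u, u \in B -> y v <= y u.
  by rewrite /v; case: arg_minnP.
pose B' := B :\ v.
have cardB' : #|B'| = #|B|.-1 by rewrite /B' (cardsD1 v B) Hv.
have [h' [Hh' Hinj']] : exists h' : T -> C, (forall u, u \in B' -> h' u \in L u /\ h' u \notin X u) /\ {in B' &, injective h'}.
  apply: IH.
  - rewrite cardB'. have : 0 < #|B| by apply/card_gt0P; exists v. lia.
  - by move=> u; rewrite inE => /andP[_ /HX].
  - move=> u; rewrite inE => /andP[_ Hu]; apply: leq_trans (Hy u Hu).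
    rewrite leq_add2l; apply: subset_leq_card; apply/subsetP=> w.
    by rewrite !inE => /andP[/andP[_ ->] ->].
have Hall : [set u in B | y v <= y u] = B.
  by apply/setP=> u; rewrite inE; case Hu: (u \in B) => //=; rewrite Hmin.
have Hyv := Hy v Hv; rewrite Hall in Hyv.
set Av := L v :\: (X v :|: h' @: B').
have : 0 < #|Av|.
  rewrite /Av cardsD.
  have h1 : #|L v :&: (X v :|: h' @: B')| <= y v + #|B'|.
    apply: leq_trans (subset_leq_card (subsetIr _ _)) _.
    apply: leq_trans (leq_card_setU _ _) _.
    apply: leq_add; first exact: HX.
    exact: leq_imset_card.
  have := HL v. have : 0 < #|B| by apply/card_gt0P; exists v. lia.
case/card_gt0P=> c Hc.
move: Hc; rewrite /Av !inE negb_or => /andP[/andP[HcX HcB] HcL].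
exists (fun u => if u == v then c else h' u); split.
  move=> u Hu; case: eqP => [->|/eqP Huv]; first by rewrite HcL.
  by apply: Hh'; rewrite /B' !inE Huv.
move=> u w Hu Hw /=.
case: eqP => [->|/eqP Huv]; case: eqP => [->|/eqP Hwv] //.
- move=> Hcw; exfalso; move/negP: HcB; apply; apply/imsetP; exists w => //.
  by rewrite /B' !inE Hwv.
- move=> Hcu; exfalso; move/negP: HcB; apply; apply/imsetP; exists u => //.
  by rewrite /B' !inE Huv.
- by move=> H; apply: Hinj' => //; rewrite /B' !inE ?Huv ?Hwv ?Hu ?Hw.
Qed.

Lemma greedy3 (T C : finType) (k : nat) (L X : T -> {set C}) (c0 : C)
  (B A1 A2 : {set T}) (c : nat) :
  (forall v, #|L v| = k) ->
  (forall v, v \in B -> #|X v| <= c + (v \in A1) + (v \in A2)) ->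
  A2 \subset A1 ->
  c + #|B| <= k -> (A1 != set0 -> c + 1 + #|A1| <= k) ->
  (A2 != set0 -> c + 2 + #|A2| <= k) ->
  exists h : T -> C, (forall v, v \in B -> h v \in L v /\ h v \notin X v) /\ {in B &, injective h}.
Proof.
move=> HL HX /subsetP A21 HB H1 H2.
apply: (greedy (y := fun v => c + (v \in A1) + (v \in A2)) c0 HL HX).
move=> v Hv.
case HA2: (v \in A2).
  have HA1 := A21 _ HA2. rewrite HA1 /=.
  have Hne : A2 != set0 by apply/set0Pn; exists v.
  have := H2 Hne.
  have : #|[set u in B | c + 1 + 1 <= c + (u \in A1) + (u \in A2)]| <= #|A2|.
    apply: subset_leq_card; apply/subsetP=> u; rewrite inE => /andP[_].
    case: (u \in A2) => //; case: (u \in A1) => /=; lia.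
  lia.
case HA1: (v \in A1).
  have Hne : A1 != set0 by apply/set0Pn; exists v.
  have := H1 Hne.
  have : #|[set u in B | c + 1 + 0 <= c + (u \in A1) + (u \in A2)]| <= #|A1|.
    apply: subset_leq_card; apply/subsetP=> u; rewrite inE => /andP[_].
    case Hu2: (u \in A2); first by rewrite (A21 _ Hu2).
    case: (u \in A1) => //=; lia.
  simpl; lia.
have : #|[set u in B | c + 0 + 0 <= c + (u \in A1) + (u \in A2)]| <= #|B|.
  by apply: subset_leq_card; apply/subsetP=> u; rewrite inE => /andP[].
simpl; lia.
Qed.

Lemma ar_kk k : 0 < k -> modstar k k = k.
Proof. move=> Hk; rewrite /modstar modn_small; lia. Qed.

Section Ext.
Variables (T C : finType) (e : rel T) (k : nat) (L : T -> {set C}).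

Definition nbU (U : {set T}) (v : T) := #|[set u in U | e v u]|.

Lemma class_sub (U : {set T}) (g : T -> C) (c : C) : color_class U g c \subset U.
Proof. by apply/subsetP=> x; rewrite inE => /andP[]. Qed.

Lemma class_le (U : {set T}) (g : T -> C) (c : C) : 0 < k -> SE_coloring e k L U g ->
  #|color_class U g c| <= ceil_div #|U| k.
Proof.
move=> Hk [_ H]; case: (posnP #|U|) => HU.
  by have := subset_leq_card (class_sub U g c); rewrite HU leqn0 => /eqP ->.
by have [H1 _] := H HU; apply: H1.
Qed.

Definition gext (B : {set T}) (h g : T -> C) := fun v => if v \in B then h v else g v.

Lemma class_ext (U B : {set T}) (g h : T -> C) (c : C) : [disjoint U & B] ->
  #|color_class (U :|: B) (gext B h g) c| = #|color_class U g c| + #|color_class B h c|.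
Proof.
move=> D.
have -> : color_class (U :|: B) (gext B h g) c = color_class U g c :|: color_class B h c.
  apply/setP=> x; rewrite !inE /gext.
  case HB: (x \in B); case HU: (x \in U) => //=; rewrite ?andbF ?andbT ?orbF //.
  by rewrite (disjointFr D HU) in HB.
rewrite cardsU.
suff -> : color_class U g c :&: color_class B h c = set0 by rewrite cards0 subn0.
apply/setP=> x; rewrite !inE.
case HB: (x \in B); case HU: (x \in U) => //=; rewrite ?andbF ?andbT //; try by rewrite (disjointFr D HU) in HB.
Qed.

Lemma class_inj (U : {set T}) (h : T -> C) (c : C) : {in U &, injective h} -> #|color_class U h c| <= 1.
Proof.
move=> Hi; apply/card_le1_eqP => x y; rewrite !inE => /andP[Hx /eqP Ex] /andP[Hy /eqP Ey].
by apply: Hi => //; rewrite Ex Ey.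
Qed.

Lemma class_pos (U : {set T}) (h : T -> C) (c : C) : 0 < #|color_class U h c| -> c \in h @: U.
Proof.
case/card_gt0P=> x; rewrite inE => /andP[Hx /eqP <-]; exact: imset_f.
Qed.

Lemma Lcol_ext (U B : {set T}) (g h : T -> C) : simple_graph e -> [disjoint U & B] -> L_coloring e L U g ->
  (forall v, v \in B -> h v \in L v) -> {in B &, injective h} ->
  (forall v u, v \in B -> u \in U -> e v u -> h v != g u) ->
  L_coloring e L (U :|: B) (gext B h g).
Proof.
move=> [Hsym Hirr] D [HL HE] HhL Hinj Hnb; split.
  move=> v; rewrite inE /gext; case HB: (v \in B); first by rewrite HhL.
  by rewrite ?orbF => /HL.
move=> u v; rewrite !inE /gext.
case Hu: (u \in B); case Hv: (v \in B) => /= Hu' Hv' Huv.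
- apply/negP=> /eqP /Hinj; rewrite Hu Hv => /(_ isT isT) E.
  by move: Huv; rewrite E Hirr.
- rewrite ?orbF in Hv'. exact: Hnb.
- rewrite ?orbF in Hu'. rewrite eq_sym; apply: Hnb => //. by rewrite Hsym.
- rewrite ?orbF in Hu' Hv'. exact: HE.
Qed.

Lemma card_full_bound (U : {set T}) (g : T -> C) : 0 < #|U| -> SE_coloring e k L U g ->
  #|[set c | #|color_class U g c| == ceil_div #|U| k]| <= modstar #|U| k.
Proof. by move=> HU [_ H]; case: (H HU). Qed.


Lemma imB_notX (B : {set T}) (h : T -> C) (X : T -> {set C}) c :
  (forall v, v \in B -> h v \in L v /\ h v \notin X v) -> c \in h @: B ->
  exists2 v, v \in B & (c = h v /\ c \notin X v).
Proof. by move=> H /imsetP[v Hv ->]; exists v => //; split => //; case: (H v Hv). Qed.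

Lemma ext_nw (c0 : C) (U B A1 A2 : {set T}) (g : T -> C) :
  0 < k -> simple_graph e -> list_assignment k L -> SE_coloring e k L U g -> [disjoint U & B] ->
  (forall v, v \in B -> nbU U v <= (v \in A1) + (v \in A2)) -> A2 \subset A1 ->
  0 < #|B| -> #|U| %% k + #|B| <= k ->
  (A1 != set0 -> #|U| %% k + 1 + #|A1| <= k) -> (A2 != set0 -> #|U| %% k + 2 + #|A2| <= k) ->
  exists g', SE_coloring e k L (U :|: B) g' /\ {in U, g' =1 g}.
Proof.
move=> Hk Hg HLk HSE D Hnb HA HB0 HBk H1 H2.
pose Full := if #|U| %% k == 0 then set0 else [set c | #|color_class U g c| == ceil_div #|U| k].
have HF : #|Full| <= #|U| %% k.
  rewrite /Full; case: eqP => [_|/eqP Hr]; first by rewrite cards0.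
  have HN : 0 < #|U| by rewrite lt0n; apply: contra Hr => /eqP ->; rewrite mod0n.
  rewrite -(ar_ms Hk Hr). exact: card_full_bound.
pose X := fun v => (g @: [set u in U | e v u]) :|: Full.
have [h [Hh Hinj]] : exists h : T -> C, (forall v, v \in B -> h v \in L v /\ h v \notin X v) /\ {in B &, injective h}.
  apply: (greedy3 (X := X) c0 (A1 := A1) (A2 := A2) (c := #|U| %% k) HLk) => //.
  move=> v Hv; apply: leq_trans (leq_card_setU _ _) _.
  have := Hnb v Hv; have := leq_imset_card g [set u in U | e v u].
  rewrite /nbU; lia.
exists (gext B h g); split; last by move=> u Hu; rewrite /gext (disjointFr D Hu).
have HSE0 := HSE; case: HSE => HLc _.
split.
  apply: (Lcol_ext Hg D HLc) => //; first by move=> v Hv; case: (Hh v Hv).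
  move=> v u Hv Hu Hvu; case: (Hh v Hv) => _; apply: contra => /eqP ->.
  by rewrite !inE; apply/orP; left; apply: imset_f; rewrite inE Hu Hvu.
move=> _.
have HUB : #|U :|: B| = #|U| + #|B| by rewrite cardsU (disjoint_setI0 D) cards0 subn0.
rewrite HUB.
case: (eqVneq (#|U| %% k) 0) => Hr.
- have [Ec Em] := ar_nw0 (N := #|U|) (w := #|B|) Hk Hr ltac:(apply/andP; split; lia).
  rewrite Ec Em; split.
    move=> c; rewrite class_ext //.
    have := class_le c Hk HSE0; have := class_inj c Hinj; lia.
  apply: leq_trans (subset_leq_card (B := h @: B) _) (leq_imset_card _ _).
  apply/subsetP=> c; rewrite inE class_ext // => /eqP Hc.
  apply: class_pos; have := class_le c Hk HSE0; lia.
- have [Ec Em] := ar_nw Hk Hr HBk.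
  rewrite Ec Em; split.
    move=> c; rewrite class_ext //.
    have := class_le c Hk HSE0; have := class_inj c Hinj.
    case: (posnP #|color_class B h c|) => Hb; first lia.
    have [v Hv [Ecv HcX]] := imB_notX Hh (class_pos Hb).
    have : c \notin Full by move: HcX; rewrite !inE negb_or => /andP[].
    rewrite /Full (negbTE Hr) inE; lia.
  apply: leq_trans (subset_leq_card (B := Full :|: h @: B) _) _.
    apply/subsetP=> c; rewrite inE class_ext // => /eqP Hc.
    rewrite inE; case: (posnP #|color_class B h c|) => Hb.
      by rewrite /Full (negbTE Hr) inE; apply/orP; left; lia.
    by rewrite class_pos ?orbT.
  apply: leq_trans (leq_card_setU _ _) _; have := leq_imset_card h B; lia.
Qed.

Lemma ext_k (c0 : C) (U B A1 A2 : {set T}) (g : T -> C) :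
  0 < k -> simple_graph e -> list_assignment k L -> SE_coloring e k L U g -> [disjoint U & B] ->
  (forall v, v \in B -> nbU U v <= (v \in A1) + (v \in A2)) -> A2 \subset A1 ->
  #|B| = k ->
  (A1 != set0 -> 1 + #|A1| <= k) -> (A2 != set0 -> 2 + #|A2| <= k) ->
  exists g', SE_coloring e k L (U :|: B) g' /\ {in U, g' =1 g}.
Proof.
move=> Hk Hg HLk HSE D Hnb HA HBk H1 H2.
pose X := fun v => g @: [set u in U | e v u].
have [h [Hh Hinj]] : exists h : T -> C, (forall v, v \in B -> h v \in L v /\ h v \notin X v) /\ {in B &, injective h}.
  apply: (greedy3 (X := X) c0 (A1 := A1) (A2 := A2) (c := 0) HLk) => //; last by rewrite HBk.
  move=> v Hv; apply: leq_trans (leq_imset_card _ _) _.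
  by have := Hnb v Hv; rewrite /nbU.
exists (gext B h g); split; last by move=> u Hu; rewrite /gext (disjointFr D Hu).
have HSE0 := HSE; case: HSE => HLc _.
split.
  apply: (Lcol_ext Hg D HLc) => //; first by move=> v Hv; case: (Hh v Hv).
  move=> v u Hv Hu Hvu; case: (Hh v Hv) => _; apply: contra => /eqP ->.
  by apply: imset_f; rewrite inE Hu Hvu.
move=> _.
have HUB : #|U :|: B| = #|U| + k by rewrite cardsU (disjoint_setI0 D) cards0 subn0 HBk.
rewrite HUB.
have [Ec Em] := ar_k #|U| Hk.
rewrite Ec; split.
  move=> c; rewrite class_ext //.
  have := class_le c Hk HSE0; have := class_inj c Hinj; lia.
case: (posnP #|U|) => HN.
- rewrite HN ar_kk //.
  apply: leq_trans (subset_leq_card (B := h @: B) _) _; last by rewrite -HBk leq_imset_card.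
  apply/subsetP=> c; rewrite inE class_ext // => /eqP Hc.
  apply: class_pos; have := class_le c Hk HSE0; rewrite HN ar_c0 //; lia.
- rewrite Em //; apply: leq_trans (card_full_bound HN HSE0).
  apply: subset_leq_card; apply/subsetP=> c; rewrite !inE class_ext // => /eqP Hc.
  have := class_le c Hk HSE0; have := class_inj c Hinj; move=> ? ?; apply/eqP; lia.
Qed.

End Ext.

Lemma arA i M : i < M -> 0 < i -> i != M.-1 -> i.+1 < M.
Proof. move=> *; lia. Qed.
Lemma arB i M : i < M -> 0 < i -> i.-1 < M.
Proof. move=> *; lia. Qed.
Lemma arC i : 0 < i -> i.-1 != i.+1.
Proof. move=> *; lia. Qed.

Section Struct.
Variables (T : finType) (e : rel T) (S : {set T}).

Definition gp (p : seq T) := [&& uniq p, all (fun x => x \in S) p & sorted e p].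

Lemma sorted_nth (p : seq T) x0 i : sorted e p -> i.+1 < size p -> e (nth x0 p i) (nth x0 p i.+1).
Proof.
case: p => [|x q] //= /(pathP x0) H Hi.
by have := H i Hi.
Qed.

Lemma exit_edge (R : rel T) (A : pred T) a b : connect R a b -> a \in A -> b \notin A ->
  exists u z, [/\ u \in A, z \notin A & R u z].
Proof.
case/connectP=> q; elim: q a => [|c q IH] a /=; first by move=> _ -> ->.
case/andP=> Hac Hq Hb Ha.
case HcA: (c \in A); first exact: IH Hq Hb HcA.
by exists a, c; rewrite HcA.
Qed.

Lemma deg3 (v a b c : T) : e v a -> e v b -> e v c -> a != b -> a != c -> b != c ->
  3 <= deg e v.
Proof.
move=> Ha Hb Hc Hab Hac Hbc.
have <- : #|[set a; b; c]| = 3.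
  rewrite !cardsU !cards1 !setIUl.
  rewrite (_ : [set a] :&: [set b] = set0); last by apply/setP=> x; rewrite !inE; apply/negP=> /andP[/eqP -> /eqP E]; rewrite E eqxx in Hab.
  rewrite (_ : [set a] :&: [set c] = set0); last by apply/setP=> x; rewrite !inE; apply/negP=> /andP[/eqP -> /eqP E]; rewrite E eqxx in Hac.
  rewrite (_ : [set b] :&: [set c] = set0); last by apply/setP=> x; rewrite !inE; apply/negP=> /andP[/eqP -> /eqP E]; rewrite E eqxx in Hbc.
  by rewrite set0U cards0.
apply: subset_leq_card; apply/subsetP=> x; rewrite !inE => /orP[/orP[]|] /eqP ->; done.
Qed.

Lemma ham_path (x : T) : symmetric e -> (forall v, v \in S -> deg e v <= 2) ->
  induced_connected e S -> x \in S ->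
  exists p : seq T, [/\ uniq p, (forall v, (v \in p) = (v \in S)), size p = #|S|
     & (forall x0 i, i.+1 < size p -> e (nth x0 p i) (nth x0 p i.+1))].
Proof.
move=> Hsym Hdeg Hcon HxS.
pose P n := [exists t : n.-tuple T, gp t].
have P1 : P 1 by apply/existsP; exists [tuple x]; rewrite /gp /= HxS.
have Pub : forall n, P n -> n <= #|T|.
  move=> n /existsP[t /and3P[Hu _ _]].
  by rewrite -(size_tuple t) -(card_uniqP Hu) max_card.
case: (ex_maxnP (ex_intro _ 1 P1) Pub) => M /existsP[t Ht] Hmax.
have {}Hmax : forall q, gp q -> size q <= M.
  by move=> q Hq; apply: Hmax; apply/existsP; exists (in_tuple q).
move: Ht; rewrite /gp => /and3P[Hu HS Hs].
have HS' : forall v, v \in t -> v \in S by move=> v Hv; move/allP: HS; apply.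
have Hcover : forall v, v \in S -> v \in t.
  move=> y Hy; apply/negPn/negP => Hyt.
  have Mpos : 0 < M by have := Hmax _ (_ : gp [:: x]); rewrite /gp /= HxS; apply.
  have Hsz : size t = M by rewrite size_tuple.
  pose x1 := nth x t 0.
  have Hx1 : x1 \in t by rewrite mem_nth // Hsz.
  have := exit_edge (Hcon _ _ (HS' _ Hx1) Hy) Hx1 Hyt.
  case=> u [z [Hut Hzt /= /and3P[Huz HuS HzS]]].
  have [a [q Et]] : exists a q, tval t = a :: q.
    by case: (tval t) Hsz Mpos => [|a q] /=; [move=> <-|exists a, q].
  set i := index u t.
  have Hi : i < M by rewrite -Hsz index_mem.
  have Eu : nth x t i = u by rewrite nth_index.
  case: (posnP i) => Hi0.
    have : gp (z :: t).
      rewrite /gp /= Hzt Hu HzS HS /=.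
      move: Hs Eu; rewrite Hi0 Et /= => Hs Ea.
      by rewrite Hs andbT Hsym Ea.
    by move/Hmax; rewrite /= Hsz ltnn.
  case: (eqVneq i M.-1) => HiM.
    have : gp (rcons t z).
      rewrite /gp rcons_uniq Hzt Hu all_rcons HzS HS /=.
      move: Hs Eu Hsz; rewrite HiM Et /= => Hs Eu Hsz.
      rewrite rcons_path Hs /= (last_nth a) (set_nth_default x) //.
      by rewrite -Hsz /= in Eu; rewrite Eu.
    by move/Hmax; rewrite size_rcons Hsz ltnn.
  have HA := arA Hi Hi0 HiM.
  have HB := arB Hi Hi0.
  have HC := arC Hi0.
  have Hprev : e u (nth x t i.-1).
    rewrite -Eu Hsym; have := sorted_nth x Hs (i := i.-1).
    by rewrite prednK // Hsz; apply.
  have Hnext : e u (nth x t i.+1).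
    by rewrite -Eu; apply: sorted_nth => //; rewrite Hsz.
  have Hne : nth x t i.-1 != nth x t i.+1.
    by rewrite nth_uniq ?Hsz // ltnW.
  have Hz1 : nth x t i.-1 != z by apply: contraNneq Hzt => <-; rewrite mem_nth // Hsz.
  have Hz2 : nth x t i.+1 != z by apply: contraNneq Hzt => <-; rewrite mem_nth // Hsz.
  have := deg3 Hprev Hnext Huz Hne Hz1 Hz2.
  by rewrite leqNgt ltnS Hdeg.
exists t; split => //.
- by move=> v; apply/idP/idP => [/HS'|/Hcover].
- rewrite -(card_uniqP Hu); apply: eq_card => v.
  by apply/idP/idP => [/HS'|/Hcover].
- by move=> x0 i Hi; apply: sorted_nth.
Qed.

End Struct.

Section Idx.
Variables (T : finType) (S : {set T}) (p : seq T) (x0 : T).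
Hypothesis Hu : uniq p.
Hypothesis HpS : forall v, (v \in p) = (v \in S).

Definition P i := nth x0 p i.
Definition seg a b := [set x in S | a <= index x p < b].
Definition Uj j := ~: S :|: seg 0 j.

Lemma PinS i : i < size p -> P i \in S.
Proof. by move=> Hi; rewrite -HpS mem_nth. Qed.

Lemma indexP i : i < size p -> index (P i) p = i.
Proof. by move=> Hi; rewrite index_uniq. Qed.

Lemma P_seg a b i : i < size p -> (P i \in seg a b) = (a <= i < b).
Proof. by move=> Hi; rewrite inE PinS // indexP. Qed.

Lemma P_inj i j : i < size p -> j < size p -> P i = P j -> i = j.
Proof. by move=> Hi Hj E; rewrite -(indexP Hi) -(indexP Hj) E. Qed.

Lemma P_neq i j : i < size p -> j < size p -> i != j -> P i != P j.
Proof. by move=> Hi Hj; apply: contraNneq => /P_inj ->. Qed.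

Lemma segP a b x : x \in seg a b -> exists2 i, (a <= i < b) && (i < size p) & x = P i.
Proof.
rewrite inE => /andP[HxS Hab]; exists (index x p).
  by rewrite Hab index_mem HpS.
by rewrite /P nth_index // HpS.
Qed.

Lemma seg_card a b : b <= size p -> #|seg a b| = b - a.
Proof.
elim: b => [|b IH] Hb.
  rewrite sub0n; apply/eqP; rewrite cards_eq0; apply/eqP/setP=> x; rewrite !inE.
  by rewrite ltn0 andbF andbF.
case: (ltnP b a) => Hab.
  rewrite (_ : b.+1 - a = 0); last by lia.
  apply/eqP; rewrite cards_eq0; apply/eqP/setP=> x; rewrite !inE.
  by apply/negP=> /and3P[_ H1 H2]; lia.
have -> : seg a b.+1 = P b |: seg a b.
  apply/setP=> x; rewrite !inE.
  apply/idP/idP.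
    case/andP=> HxS /andP[H1 H2]; rewrite HxS /=.
    case: (ltngtP (index x p) b) => H3; [by rewrite H1 /= orbT| lia|].
    by apply/orP; left; rewrite -H3 /P nth_index // HpS.
  case/orP=> [/eqP ->|/and3P[-> -> H] ]; last by rewrite ltnS ltnW.
  have Hb' : b < size p by lia.
  by rewrite PinS // indexP // Hab ltnSn.
rewrite cardsU1 P_seg ?IH; [|lia|lia].
rewrite (_ : (a <= b < b) = false); last by lia.
simpl; lia.
Qed.

Lemma Uj_card j : j <= size p -> size p = #|S| -> #|Uj j| = #|T| - #|S| + j.
Proof.
move=> Hj Hs.
rewrite /Uj cardsU cardsCs setCK seg_card // subn0.
suff -> : ~: S :&: seg 0 j = set0 by rewrite cards0 subn0.
by apply/setP=> x; rewrite !inE; case: (x \in S).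
Qed.

Lemma P_U i j : i < size p -> (P i \in Uj j) = (i < j).
Proof. by move=> Hi; rewrite inE P_seg // inE PinS. Qed.

Lemma Uj_split j j' : j <= j' -> Uj j :|: seg j j' = Uj j'.
Proof.
move=> Hj; apply/setP=> x; rewrite !inE.
case: (x \in S) => //=;
case: (ltnP (index x p) j) => H //=; by rewrite (leq_trans H Hj).
Qed.

Lemma Uj_disj j j' : [disjoint Uj j & seg j j'].
Proof.
rewrite -setI_eq0; apply/eqP/setP=> x; rewrite !inE.
case: (x \in S) => //=.
by case: (ltnP (index x p) j) => H //=; rewrite andbF.
Qed.

Lemma Uj_full : size p = #|S| -> Uj (size p) = setT.
Proof.
move=> _; apply/setP=> x; rewrite !inE.
case HxS: (x \in S) => //=; by rewrite index_mem HpS HxS.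
Qed.

End Idx.
Arguments P : simpl never.

Section Nb.
Variables (T : finType) (e : rel T).

Lemma nb_le_deg (U : {set T}) v : nbU e U v <= deg e v.
Proof. by apply: subset_leq_card; apply/subsetP=> w; rewrite !inE => /andP[]. Qed.

Lemma nb_le1 (U : {set T}) v u : deg e v <= 2 -> u \notin U -> e v u -> nbU e U v <= 1.
Proof.
move=> Hd Hu Hvu.
have : nbU e U v <= #|[set w | e v w] :\ u|.
  apply: subset_leq_card; apply/subsetP=> w; rewrite !inE => /andP[Hw ->].
  by rewrite andbT; apply: contraNneq Hu => <-.
rewrite /deg (cardsD1 u [set w | e v w]) inE Hvu /= in Hd.
lia.
Qed.

Lemma nb_0 (U : {set T}) v u1 u2 : deg e v <= 2 -> u1 != u2 -> u1 \notin U -> u2 \notin U ->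
  e v u1 -> e v u2 -> nbU e U v = 0.
Proof.
move=> Hd H12 Hu1 Hu2 H1 H2.
have : nbU e U v <= #|([set w | e v w] :\ u1) :\ u2|.
  apply: subset_leq_card; apply/subsetP=> w; rewrite !inE => /andP[Hw ->].
  rewrite andbT; apply/andP; split; [apply: contraNneq Hu2 => <- | apply: contraNneq Hu1 => <-] => //.
have E1 := cardsD1 u1 [set w | e v w].
have E2 := cardsD1 u2 ([set w | e v w] :\ u1).
rewrite !inE H1 H2 eq_sym H12 /= in E1 E2.
rewrite /deg in Hd; rewrite /nbU; lia.
Qed.

End Nb.


Lemma arS2 n k : 3 <= k -> 2 <= n -> n %% k != 0 -> n %% k != 1 -> (n - 2) %% k + 3 <= k.
Proof.
move=> Hk Hn; have Hk0 : 0 < k by lia.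
have [q [R [E [HR Hm]]]] := decomp n Hk0; rewrite Hm => H0 H1.
have -> : n - 2 = q * k + (R - 2) by lia.
rewrite modnMDl modn_small; lia.
Qed.

Lemma arS1 n k : 3 <= k -> 1 <= n -> n %% k != 0 -> (n + 1) %% k != 0 -> (n - 1) %% k + 3 <= k.
Proof.
move=> Hk Hn; have Hk0 : 0 < k by lia.
have [q [R [E [HR Hm]]]] := decomp n Hk0; rewrite Hm => H0 H2.
case: (ltnP R.+1 k) => HR2; last first.
  rewrite (_ : n + 1 = q.+1 * k) ?modnMl ?eqxx // in H2.
  by rewrite mulSn; lia.
have -> : n - 1 = q * k + (R - 1) by lia.
rewrite modnMDl modn_small; lia.
Qed.

Lemma arS4 n : 4 <= n -> n %% 3 != 0 -> (n - 4) %% 3 != 2.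
Proof.
move=> Hn H; apply/negP=> /eqP H2; move/negP: H; apply.
have [q [R [E [HR Hm]]]] := decomp (n - 4) (isT : 0 < 3).
rewrite Hm in H2; subst R.
rewrite (_ : n = (q + 2) * 3) ?modnMl //; lia.
Qed.

Lemma arRho s k : 3 <= k -> 2 <= s -> s %% k = 1 -> k < s.
Proof.
move=> Hk Hs H; rewrite ltnNge; apply/negP => Hks.
case: (ltnP s k) => Hsk.
  by rewrite modn_small // in H; lia.
have Es : s = k by lia.
by rewrite Es modnn in H.
Qed.


Section Plan.
Variables (T C : finType) (e : rel T) (k : nat) (L : T -> {set C}) (S : {set T}) (p : seq T) (x0 : T).
Hypothesis Hk : 3 <= k.
Hypothesis Hg : simple_graph e.
Hypothesis HL : list_assignment k L.
Hypothesis Hu : uniq p.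
Hypothesis HpS : forall v, (v \in p) = (v \in S).
Hypothesis Hsz : size p = #|S|.
Hypothesis Hdeg : forall v, v \in S -> deg e v <= 2.
Hypothesis Hadj : forall i, i.+1 < size p -> e (P p x0 i) (P p x0 i.+1).
Variable c0 : C.

Local Notation P := (P p x0).
Local Notation seg := (seg S p).
Local Notation Uj := (Uj S p).
Local Notation SE := (SE_coloring e k L).

Lemma adj_prev i : 0 < i -> i < size p -> e (P i) (P i.-1).
Proof.
move=> H0 Hi; case: Hg => Hsym _; rewrite Hsym.
by have := Hadj (i := i.-1); rewrite prednK //; apply.
Qed.

Lemma nbP_next (U : {set T}) i : i.+1 < size p -> P i.+1 \notin U -> nbU e U (P i) <= 1.
Proof.
move=> Hi HU; apply: nb_le1 HU (Hadj Hi); apply: Hdeg; apply: (PinS x0 HpS); exact: ltnW.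
Qed.

Lemma nbP_prev (U : {set T}) i : 0 < i -> i < size p -> P i.-1 \notin U -> nbU e U (P i) <= 1.
Proof.
move=> H0 Hi HU; apply: nb_le1 HU (adj_prev H0 Hi); apply: Hdeg; exact: (PinS x0 HpS).
Qed.

Lemma nbP_both (U : {set T}) i : 0 < i -> i.+1 < size p -> P i.-1 \notin U -> P i.+1 \notin U ->
  nbU e U (P i) = 0.
Proof.
move=> H0 Hi H1 H2; apply: (nb_0 (u1 := P i.-1) (u2 := P i.+1)) => //.
- apply: Hdeg; apply: (PinS x0 HpS); exact: ltnW.
- apply: (P_neq x0 Hu) => //; lia.
- apply: adj_prev => //; exact: ltnW.
- exact: Hadj.
Qed.

Lemma nb_le2 (U : {set T}) v : v \in S -> nbU e U v <= 2.
Proof. move=> Hv; exact: leq_trans (nb_le_deg _ _ _) (Hdeg Hv). Qed.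

Lemma batches m : forall j g, j + m * k = size p -> SE (Uj j) g ->
  exists g', SE setT g' /\ {in Uj j, g' =1 g}.
Proof.
elim: m => [|m IH] j g Hj HSE.
  rewrite mul0n addn0 in Hj.
  by exists g; split => //; rewrite -(Uj_full HpS Hsz) -Hj.
have Hjk : j + k <= size p by rewrite -Hj mulSn; lia.
have [g1 [HSE1 E1]] : exists g1, SE (Uj j :|: seg j (j + k)) g1 /\ {in Uj j, g1 =1 g}.
  apply: (ext_k c0 (A1 := [set P j; P (j + k).-1]) (A2 := set0)) => //.
  - lia.
  - exact: (Uj_disj S p).
  - move=> v /(segP x0 HpS) [i /andP[/andP[Hi1 Hi2] Hi3] ->].
    rewrite in_set0 addn0.
    have Hnot : forall i', j <= i' -> i' < size p -> P i' \notin Uj j.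
      by move=> i' H1 H2; rewrite (P_U x0 Hu HpS) // -leqNgt.
    case: (eqVneq i j) => [->|Hij].
      rewrite !inE eqxx /=; apply: nbP_next; [lia| apply: Hnot; lia].
    case: (eqVneq i (j + k).-1) => [->|Hik].
      rewrite !inE eqxx orbT /=; apply: nbP_prev; [lia|lia|apply: Hnot; lia].
    rewrite (nbP_both (i := i)) //; [lia|lia|apply: Hnot; lia|apply: Hnot; lia].
  - by rewrite sub0set.
  - by rewrite (seg_card x0 Hu HpS) //; lia.
  - by move=> _; rewrite cards2; case: (_ != _) => /=; lia.
  - by rewrite eqxx.
rewrite (Uj_split S p) in HSE1; last lia.
have [g2 [HSE2 E2]] := IH (j + k) g1 ltac:(by rewrite -Hj mulSn addnA) HSE1.
exists g2; split => // v Hv; rewrite E2 ?E1 //.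
rewrite -(Uj_split S p (j := j) (j' := j + k)); [by rewrite inE Hv | exact: leq_addr].
Qed.


Definition A1of (U B : {set T}) := [set v in B | 0 < nbU e U v].
Definition A2of (U B : {set T}) := [set v in B | 1 < nbU e U v].

Lemma Aof_nb (U B : {set T}) v : B \subset S -> v \in B ->
  nbU e U v <= (v \in A1of U B) + (v \in A2of U B).
Proof.
move=> /subsetP HB Hv; have := nb_le2 U (HB _ Hv).
rewrite !inE Hv /=; case: (nbU e U v) => [|[|[|]]] //=.
Qed.

Lemma A21 (U B : {set T}) : A2of U B \subset A1of U B.
Proof. by apply/subsetP=> v; rewrite !inE => /andP[-> H]; apply: leq_trans H. Qed.

Lemma ext_nw_auto (U B : {set T}) g : SE U g -> [disjoint U & B] -> B \subset S ->
  0 < #|B| -> #|U| %% k + #|B| <= k ->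
  (A1of U B != set0 -> #|U| %% k + 1 + #|A1of U B| <= k) ->
  (A2of U B != set0 -> #|U| %% k + 2 + #|A2of U B| <= k) ->
  exists g', SE (U :|: B) g' /\ {in U, g' =1 g}.
Proof.
move=> HSE D HBS H0 HB H1 H2.
apply: (ext_nw c0 (A1 := A1of U B) (A2 := A2of U B)) => //; first lia.
- by move=> v; apply: Aof_nb.
- exact: A21.
Qed.

Lemma ext_k_auto (U B : {set T}) g : SE U g -> [disjoint U & B] -> B \subset S ->
  #|B| = k ->
  (A1of U B != set0 -> 1 + #|A1of U B| <= k) ->
  (A2of U B != set0 -> 2 + #|A2of U B| <= k) ->
  exists g', SE (U :|: B) g' /\ {in U, g' =1 g}.
Proof.
move=> HSE D HBS HB H1 H2.
apply: (ext_k c0 (A1 := A1of U B) (A2 := A2of U B)) => //; first lia.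
- by move=> v; apply: Aof_nb.
- exact: A21.
Qed.

Lemma A1_sub (U B X : {set T}) : (forall v, v \in B -> v \notin X -> nbU e U v = 0) ->
  A1of U B \subset X.
Proof.
move=> H; apply/subsetP=> v; rewrite inE => /andP[Hv Hn].
by apply/negPn/negP => /(H v Hv) E; rewrite E in Hn.
Qed.

Lemma A2_sub (U B X : {set T}) : (forall v, v \in B -> v \notin X -> nbU e U v <= 1) ->
  A2of U B \subset X.
Proof.
move=> H; apply/subsetP=> v; rewrite inE => /andP[Hv Hn].
by apply/negPn/negP => /(H v Hv) E; lia.
Qed.

Lemma A1_B (U B : {set T}) : #|A1of U B| <= #|B|.
Proof. by apply: subset_leq_card; apply/subsetP=> v; rewrite inE => /andP[]. Qed.
Lemma A2_B (U B : {set T}) : #|A2of U B| <= #|B|.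
Proof. by apply: subset_leq_card; apply/subsetP=> v; rewrite inE => /andP[]. Qed.

Lemma seg_sub a b : seg a b \subset S.
Proof. by apply/subsetP=> x; rewrite inE => /andP[]. Qed.

Lemma Uj0 : Uj 0 = ~: S.
Proof.
apply/setP=> x; rewrite !inE ltn0 andbF andbF orbF //.
Qed.

Lemma finish j g : j <= size p -> (size p - j) %% k = 0 -> SE (Uj j) g ->
  exists g', SE setT g' /\ {in Uj j, g' =1 g}.
Proof.
move=> Hj Hm; apply: (batches (m := (size p - j) %/ k)).
by have := divn_eq (size p - j) k; rewrite Hm addn0; lia.
Qed.

Lemma stage_seg j j' g : j < j' <= size p -> SE (Uj j) g ->
  #|Uj j| %% k + (j' - j) <= k ->
  (A1of (Uj j) (seg j j') != set0 -> #|Uj j| %% k + 1 + #|A1of (Uj j) (seg j j')| <= k) ->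
  (A2of (Uj j) (seg j j') != set0 -> #|Uj j| %% k + 2 + #|A2of (Uj j) (seg j j')| <= k) ->
  exists g', SE (Uj j') g' /\ {in Uj j, g' =1 g}.
Proof.
move=> /andP[Hjj Hj'] HSE Hc H1 H2.
rewrite -(Uj_split S p (j := j) (j' := j')); last exact: ltnW.
apply: ext_nw_auto => //.
- exact: (Uj_disj S p).
- exact: seg_sub.
- by rewrite (seg_card x0 Hu HpS) //; lia.
- by rewrite (seg_card x0 Hu HpS).
Qed.

Lemma notU0 i : i < size p -> P i \notin Uj 0.
Proof. by move=> Hi; rewrite (P_U x0 Hu HpS). Qed.


Lemma routeA f : size p %% k = 0 -> SE (Uj 0) f ->
  exists g, SE setT g /\ {in Uj 0, g =1 f}.
Proof. by move=> H; apply: finish => //; rewrite subn0. Qed.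

Lemma mod_sub_rho : (size p - size p %% k) %% k = 0.
Proof.
have E := divn_eq (size p) k.
have -> : size p - size p %% k = size p %/ k * k by rewrite {1}E addnK.
by rewrite modnMl.
Qed.

Lemma rho_le : size p %% k <= size p.
Proof. exact: leq_mod. Qed.

Lemma routeB1 f : size p = 1 -> #|Uj 0| %% k + 3 <= k -> SE (Uj 0) f ->
  exists g, SE setT g /\ {in Uj 0, g =1 f}.
Proof.
move=> Hs Hr HSE.
have [g1 [H1 E1]] : exists g1, SE (Uj 1) g1 /\ {in Uj 0, g1 =1 f}.
  apply: stage_seg => //; first by rewrite Hs.
  - lia.
  - move=> _; have := A1_B (Uj 0) (seg 0 1).
    rewrite (seg_card x0 Hu HpS) ?Hs //; lia.
  - move=> _; have := A2_B (Uj 0) (seg 0 1).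
    rewrite (seg_card x0 Hu HpS) ?Hs //; lia.
have [g2 [H2 E2]] := finish (j := 1) (g := g1) ltac:(by rewrite Hs) ltac:(by rewrite Hs subnn mod0n) H1.
exists g2; split => // v Hv; rewrite E2 ?E1 //.
by move: Hv; rewrite !inE => /orP[->|]; rewrite ?ltn0 ?andbF.
Qed.


Lemma routeB rho f : 2 <= size p -> 0 < rho <= size p -> (size p - rho) %% k = 0 ->
  #|Uj 0| %% k + rho <= k ->
  #|Uj 0| %% k + 1 + (nbU e (Uj 0) (P 0) != 0) + (rho == size p) <= k ->
  SE (Uj 0) f -> exists g, SE setT g /\ {in Uj 0, g =1 f}.
Proof.
move=> Hs2 /andP[Hr0 Hrs] Hmod Hc Hc2 HSE.
have [g1 [H1 E1]] : exists g1, SE (Uj rho) g1 /\ {in Uj 0, g1 =1 f}.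
  apply: stage_seg => //; first by rewrite Hr0.
  - lia.
  - move=> _.
    pose X := (if nbU e (Uj 0) (P 0) == 0 then set0 else [set P 0]) :|:
              (if rho == size p then [set P (size p).-1] else set0).
    have HX : #|X| <= (nbU e (Uj 0) (P 0) != 0) + (rho == size p).
      apply: leq_trans (leq_card_setU _ _) _; apply: leq_add.
        by case: eqP => _; rewrite ?cards0 ?cards1.
      by case: eqP => _; rewrite ?cards0 ?cards1.
    have : #|A1of (Uj 0) (seg 0 rho)| <= #|X|.
      apply: subset_leq_card; apply: A1_sub => v /(segP x0 HpS) [i /andP[/andP[_ Hi] Hi'] ->].
      rewrite !inE negb_or => /andP[HX1 HX2].
      case: (posnP i) => [Hi0|Hi0].
        move: HX1; rewrite Hi0; case: eqP => [E _|_]; first exact: E.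
        by rewrite inE eqxx.
      case: (eqVneq i (size p).-1) => [Ei|Ni].
        move: HX2; case: eqP => [_|Hne]; first by rewrite Ei inE eqxx.
        exfalso; apply: Hne; lia.
      apply: nbP_both => //; [lia | apply: notU0; lia | apply: notU0; lia].
    lia.
  - move=> HA2; exfalso; move/negP: HA2; apply; rewrite -subset0.
    apply: A2_sub => v /(segP x0 HpS) [i /andP[/andP[_ Hi] Hi'] ->] _.
    case: (ltnP i.+1 (size p)) => Hi2.
      by apply: nbP_next => //; apply: notU0.
    apply: nbP_prev; [lia|lia|apply: notU0; lia].
have [g2 [H2 E2]] := finish Hrs Hmod H1.
exists g2; split => // v Hv; rewrite E2 ?E1 //.
by move: Hv; rewrite !inE => /orP[->|]; rewrite ?ltn0 ?andbF.
Qed.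


Lemma U1_P a i : i < size p -> (P i \in Uj 0 :|: seg 1 a) = (0 < i < a).
Proof. by move=> Hi; rewrite inE (negbTE (notU0 Hi)) (P_seg x0 Hu HpS). Qed.

Lemma U1_disj a : [disjoint Uj 0 & seg 1 a].
Proof.
rewrite Uj0 -setI_eq0; apply/eqP/setP=> x; rewrite !inE.
by case: (x \in S).
Qed.

Lemma P0_notseg a b : 0 < a -> 0 < size p -> P 0 \notin seg a b.
Proof. by move=> Ha Hs; rewrite (P_seg x0 Hu HpS) // leqNgt Ha. Qed.

Lemma U1_card a : 0 < a <= size p -> #|Uj 0 :|: seg 1 a| = #|Uj 0| + (a - 1).
Proof.
move=> /andP[Ha Has].
rewrite cardsU (disjoint_setI0 (U1_disj a)) cards0 subn0 (seg_card x0 Hu HpS) //.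
Qed.

Lemma W2_card a b : 0 < a <= b -> b <= size p -> #|P 0 |: seg a b| = (b - a).+1.
Proof.
move=> /andP[Ha Hab] Hb.
by rewrite cardsU1 P0_notseg // ?(seg_card x0 Hu HpS) //; lia.
Qed.

Lemma W2_sub a b : 0 < size p -> P 0 |: seg a b \subset S.
Proof.
move=> Hs; apply/subsetP=> x; rewrite !inE => /orP[/eqP ->|/andP[] //].
exact: (PinS x0 HpS).
Qed.

Lemma U1W2_disj a b : 0 < a -> 0 < size p -> [disjoint Uj 0 :|: seg 1 a & P 0 |: seg a b].
Proof.
move=> Ha Hs; rewrite -setI_eq0; apply/eqP/setP=> x; rewrite !inE.
case HxS: (x \in S) => /=; last first.
  by case: eqP => // E; move: HxS; rewrite E (PinS x0 HpS).
have Hx : x = P (index x p) by rewrite /P nth_index // HpS.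
have Hi : index x p < size p by rewrite index_mem HpS.
case: eqP => [E|_] /=.
  by rewrite E (indexP x0 Hu) // andbF.
case: (ltnP (index x p) a) => H; rewrite ?andbF ?andbT //=.
Qed.

Lemma U1_W2 a b : 0 < a <= b -> b <= size p ->
  (Uj 0 :|: seg 1 a) :|: (P 0 |: seg a b) = Uj b.
Proof.
move=> /andP[Ha Hab] Hb; apply/setP=> x; rewrite !inE.
case HxS: (x \in S) => //=.
have Hx : x = P (index x p) by rewrite /P nth_index // HpS.
have Hi : index x p < size p by rewrite index_mem HpS.
have -> : (x == P 0) = (index x p == 0).
  apply/eqP/eqP => [E|E]; first by rewrite E (indexP x0 Hu) //; lia.
  by rewrite Hx E.
case: (ltngtP (index x p) 0) => H //=; rewrite ?ltn0 //.
  case: (ltnP (index x p) a) => H2 //=; rewrite ?(leq_trans H2 Hab) //.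
by rewrite H; lia.
Qed.

Lemma mod_comp N r : N %% k = r -> 0 < r -> (N + (k - r)) %% k = 0.
Proof.
move=> HN Hr.
have E := divn_eq N k.
have Hrk : r < k by rewrite -HN ltn_mod; lia.
have -> : N + (k - r) = (N %/ k).+1 * k by rewrite {1}E HN mulSn; lia.
by rewrite modnMl.
Qed.

Lemma routeC f : 3 <= size p -> 0 < size p %% k -> k < #|Uj 0| %% k + size p %% k ->
  SE (Uj 0) f -> exists g, SE setT g /\ {in Uj 0, g =1 f}.
Proof.
move=> Hs3 Hrho Hwrap HSE.
have Hk0 : 0 < k by lia.
have [r0 Er0] : {r0 | #|Uj 0| %% k = r0} by exists (#|Uj 0| %% k).
have [rho Erho] : {rho | size p %% k = rho} by exists (size p %% k).
rewrite Er0 Erho in Hwrap; rewrite Erho in Hrho.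
have Hr0k : r0 < k by rewrite -Er0 ltn_mod.
have Hrhok : rho < k by rewrite -Erho ltn_mod.
have Hrhos : rho <= size p by rewrite -Erho; exact: leq_mod.
have [w1 Ew1] : {w1 | w1 = k - r0} by exists (k - r0).
have Hw1 : 0 < w1 < rho by rewrite Ew1; lia.
have [g1 [H1 E1]] : exists g1, SE (Uj 0 :|: seg 1 w1.+1) g1 /\ {in Uj 0, g1 =1 f}.
  apply: ext_nw_auto => //.
  - exact: U1_disj.
  - exact: seg_sub.
  - by rewrite (seg_card x0 Hu HpS); lia.
  - by rewrite (seg_card x0 Hu HpS); move: Er0; lia.
  - case/set0Pn=> v0 Hv0.
    have HA : A1of (Uj 0) (seg 1 w1.+1) \subset [set P (size p).-1].
      apply: A1_sub => v /(segP x0 HpS) [i /andP[/andP[Hi1 Hi2] Hi3] ->].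
      rewrite inE => Hne.
      have Hne' : i != (size p).-1 by apply: contraNneq Hne => ->.
      clear Hne; apply: nbP_both => //; [lia | apply: notU0; lia | apply: notU0; lia].
    have Hc1 : #|A1of (Uj 0) (seg 1 w1.+1)| <= 1.
      by apply: leq_trans (subset_leq_card HA) _; rewrite cards1.
    have Hv0' := subsetP HA _ Hv0; rewrite inE in Hv0'; move/eqP: Hv0' => Ev0.
    have Hs1 : (size p).-1 < size p by lia.
    move: Hv0; rewrite inE => /andP[]; rewrite Ev0 (P_seg x0 Hu HpS) // => Hin _.
    move: Hin Hc1 Er0; lia.
  - move=> HA2; exfalso; move/negP: HA2; apply; rewrite -subset0.
    apply: A2_sub => v /(segP x0 HpS) [i /andP[/andP[Hi1 Hi2] Hi3] ->] _.
    case: (ltnP i.+1 (size p)) => Hi4.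
      by apply: nbP_next => //; apply: notU0.
    apply: nbP_prev; [lia|lia|apply: notU0; lia].
have Hcard1 : #|Uj 0 :|: seg 1 w1.+1| = #|Uj 0| + w1.
  by rewrite U1_card ?subn1 //; lia.
have Hmod1 : #|Uj 0 :|: seg 1 w1.+1| %% k = 0.
  by rewrite Hcard1 Ew1; apply: mod_comp => //; lia.
have Hc2 : #|P 0 |: seg w1.+1 rho| = rho - w1 by rewrite W2_card //; lia.
have [g2 [H2 E2]] : exists g2, SE ((Uj 0 :|: seg 1 w1.+1) :|: (P 0 |: seg w1.+1 rho)) g2 /\
    {in Uj 0 :|: seg 1 w1.+1, g2 =1 g1}.
  apply: ext_nw_auto => //.
  - apply: U1W2_disj; lia.
  - apply: W2_sub; lia.
  - rewrite Hc2; lia.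
  - rewrite Hmod1 Hc2; lia.
  - move=> _; have := A1_B (Uj 0 :|: seg 1 w1.+1) (P 0 |: seg w1.+1 rho).
    rewrite Hmod1 Hc2; lia.
  - move=> _; have := A2_B (Uj 0 :|: seg 1 w1.+1) (P 0 |: seg w1.+1 rho).
    rewrite Hmod1 Hc2; lia.
rewrite U1_W2 in H2; [|lia|lia].
have [g3 [H3 E3]] := finish Hrhos ltac:(by rewrite -Erho mod_sub_rho) H2.
exists g3; split => // v Hv.
have Hv1 : v \in Uj 0 :|: seg 1 w1.+1 by rewrite inE Hv.
have Hv2 : v \in Uj rho.
  by rewrite -(U1_W2 (a := w1.+1) (b := rho)); [rewrite inE Hv1 | lia | lia].
by rewrite E3 // E2 // E1.
Qed.


Lemma mod_D1 : size p %% k = 1 -> k < size p -> (size p - k.+1) %% k = 0.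
Proof.
move=> H1 Hks.
have E := divn_eq (size p) k; rewrite H1 in E.
move: E; set q := size p %/ k => E.
have -> : size p - k.+1 = (q - 1) * k by rewrite mulnBl mul1n; lia.
by rewrite modnMl.
Qed.

Lemma routeD f : size p %% k = 1 -> #|Uj 0| %% k = k.-1 -> k < size p ->
  (4 <= k) || (k.+1 < size p) ->
  SE (Uj 0) f -> exists g, SE setT g /\ {in Uj 0, g =1 f}.
Proof.
move=> Hrho Hr0 Hks Hor HSE.
have Hs3 : 3 < size p by lia.
have HA1 : A1of (Uj 0) (seg 1 2) = set0.
  apply/eqP; rewrite -subset0; apply: A1_sub => v /(segP x0 HpS) [i /andP[/andP[Hi1 Hi2] Hi3] ->] _.
  have -> : i = 1 by lia.
  by apply: nbP_both; [done|lia|apply: notU0; lia|apply: notU0; lia].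
have [g1 [H1 E1]] : exists g1, SE (Uj 0 :|: seg 1 2) g1 /\ {in Uj 0, g1 =1 f}.
  apply: ext_nw_auto => //.
  - exact: U1_disj.
  - exact: seg_sub.
  - by rewrite (seg_card x0 Hu HpS) //; lia.
  - by rewrite (seg_card x0 Hu HpS) //; move: Hr0; lia.
  - by rewrite HA1 eqxx.
  - move=> HA2; exfalso; move/negP: HA2; apply; rewrite -subset0 -HA1; exact: A21.
have Hnot : forall i, 2 <= i -> i < size p -> P i \notin Uj 0 :|: seg 1 2.
  by move=> i H2 Hi; rewrite U1_P //; lia.
pose X := P 0 |: (P 2 |: (if k.+1 < size p then set0 else [set P k])).
have HX : #|X| <= 2 + (k.+1 >= size p).
  apply: leq_trans (leq_card_setU _ _) _; rewrite cards1.
  apply: (leq_trans (leq_add (leqnn 1) (leq_card_setU _ _))); rewrite cards1.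
  by case: ltnP => _; rewrite ?cards0 ?cards1.
have [g2 [H2 E2]] : exists g2, SE ((Uj 0 :|: seg 1 2) :|: (P 0 |: seg 2 k.+1)) g2 /\
    {in Uj 0 :|: seg 1 2, g2 =1 g1}.
  apply: ext_k_auto => //.
  - apply: U1W2_disj; lia.
  - apply: W2_sub; lia.
  - rewrite W2_card //; lia.
  - move=> _; have : #|A1of (Uj 0 :|: seg 1 2) (P 0 |: seg 2 k.+1)| <= #|X|.
      apply: subset_leq_card; apply: A1_sub => v.
      rewrite in_setU1 => /orP[/eqP ->|]; first by rewrite /X !inE eqxx.
      move=> /(segP x0 HpS) [i /andP[/andP[Hi1 Hi2] Hi3] ->].
      rewrite /X !inE negb_or => /andP[H0 /norP[Hne2 Hk']].
      have Hi2' : i != 2 by apply: contraNneq Hne2 => ->.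
      have Hik : (k.+1 < size p) || (i != k).
        case: ltnP Hk' => //= _; rewrite inE => Hne.
        by apply: contraNneq Hne => ->.
      clear H0 Hne2 Hk'.
      apply: nbP_both => //; [lia|lia|apply: Hnot; lia|apply: Hnot; lia].
    move: HX Hor Hk; clear; lia.
  - move=> _; have : #|A2of (Uj 0 :|: seg 1 2) (P 0 |: seg 2 k.+1)| <= #|[set P 0]|.
      apply: subset_leq_card; apply: A2_sub => v.
      rewrite in_setU1 => /orP[/eqP ->|]; first by rewrite inE eqxx.
      move=> /(segP x0 HpS) [i /andP[/andP[Hi1 Hi2] Hi3] ->] _.
      case: (eqVneq i 2) => [->|Hi2'].
        by apply: nbP_next; [lia | apply: Hnot; lia].
      by apply: nbP_prev; [lia | lia | apply: Hnot; lia].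
    rewrite cards1; lia.
rewrite U1_W2 in H2; [|lia|lia].
have [g3 [H3 E3]] := finish Hks (mod_D1 Hrho Hks) H2.
exists g3; split => // v Hv.
have Hv1 : v \in Uj 0 :|: seg 1 2 by rewrite inE Hv.
have Hv2 : v \in Uj k.+1.
  by rewrite -(U1_W2 (a := 2) (b := k.+1)); [rewrite inE Hv1 | lia | lia].
by rewrite E3 // E2 // E1.
Qed.


Lemma plan_main f : 0 < #|S| ->
  (forall x y, x \in S -> y \notin S -> ~~ e x y) \/
  (3 <= #|S| <= k) \/ (5 <= #|S|) \/
  [&& #|S| == 1, #|T| %% k != 0 & (#|T| + 1) %% k != 0] \/
  [&& #|S| == 2, #|T| %% k != 0 & #|T| %% k != 1] \/
  [&& #|S| == 4, k == 3 & #|T| %% 3 != 0] ->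
  (#|S| <= 2 -> exists x u, [/\ x \in S, u \notin S & e x u]) ->
  SE (Uj 0) f -> exists g, SE setT g /\ {in Uj 0, g =1 f}.
Proof using Hk Hg HL Hu HpS Hsz Hdeg Hadj c0.
rewrite -Hsz => Hs0 Hcase Hnb HSE.
have Hk0 : 0 < k by lia.
have HN : #|Uj 0| = #|T| - size p by rewrite (Uj_card x0 Hu HpS) // addn0 Hsz.
have Hsn : size p <= #|T| by rewrite Hsz max_card.
have Hr0k : #|Uj 0| %% k < k by rewrite ltn_mod.
have Hrhok : size p %% k < k by rewrite ltn_mod.
have Hrhos : size p %% k <= size p by exact: leq_mod.
have Hnoti : (exists x u, [/\ x \in S, u \notin S & e x u]) ->
    ~ (forall x y, x \in S -> y \notin S -> ~~ e x y).
  by case=> x [u [Hx Hu' Hxu]] H; move: (H x u Hx Hu'); rewrite Hxu.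
have Hα : nbU e (Uj 0) (P 0) != 0 -> exists x u, [/\ x \in S, u \notin S & e x u].
  rewrite -lt0n => /card_gt0P [u]; rewrite inE Uj0 inE => /andP[Hu' He].
  by exists (P 0), u; split => //; apply: (PinS x0 HpS).
case: (posnP (size p %% k)) => Hrho; first exact: routeA.
case: (ltnP k (#|Uj 0| %% k + size p %% k)) => Hwrap.
  case: (leqP 3 (size p)) => Hs3; first exact: routeC.
  exfalso.
  have Hsm : size p %% k = size p by rewrite modn_small //; lia.
  rewrite Hsm in Hwrap.
  case: (eqVneq (size p) 1) => Hs1; first by lia.
  have Hs2 : size p = 2 by lia.
  have Hv : [&& #|T| %% k != 0 & #|T| %% k != 1].
    case: Hcase => [Hi|[Hii|[Hiii|[Hiv|[Hv|Hvi]]]]].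
    - by exfalso; apply: (Hnoti (Hnb ltac:(lia))).
    - lia.
    - lia.
    - by move: Hiv; rewrite Hs2.
    - by move: Hv; rewrite Hs2.
    - by move: Hvi; rewrite Hs2.
  case/andP: Hv => Hv1 Hv2.
  have := arS2 (n := #|T|) Hk ltac:(by rewrite -Hs2) Hv1 Hv2.
  rewrite (_ : #|T| - 2 = #|Uj 0|); last by rewrite HN Hs2.
  move: Hwrap; rewrite Hs2; lia.
case: (eqVneq (size p) 1) => Hs1.
  apply: routeB1 => //.
  have Hiv : [&& #|T| %% k != 0 & (#|T| + 1) %% k != 0].
    case: Hcase => [Hi|[Hii|[Hiii|[Hiv|[Hv|Hvi]]]]].
    - by exfalso; apply: (Hnoti (Hnb ltac:(lia))).
    - lia.
    - lia.
    - by move: Hiv; rewrite Hs1.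
    - by move: Hv; rewrite Hs1.
    - by move: Hvi; rewrite Hs1.
  case/andP: Hiv => H1 H2.
  by rewrite HN Hs1; apply: arS1 => //; rewrite -Hs1.
have Hs2 : 2 <= size p by lia.
case: (eqVneq (size p %% k) (size p)) => Hrs.
  apply: (routeB (rho := size p)) => //.
  - by rewrite lt0n; apply/eqP; lia.
  - by rewrite subnn mod0n.
  - by rewrite -Hrs.
  - rewrite eqxx.
    case: (eqVneq (size p) 2) => Hs2'.
      have Hv : [&& #|T| %% k != 0 & #|T| %% k != 1].
        case: Hcase => [Hi|[Hii|[Hiii|[Hiv|[Hv|Hvi]]]]].
        - by exfalso; apply: (Hnoti (Hnb ltac:(lia))).
        - lia.
        - lia.
        - by move: Hiv; rewrite Hs2'.
        - by move: Hv; rewrite Hs2'.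
        - by move: Hvi; rewrite Hs2'.
      case/andP: Hv => Hv1 Hv2.
      have := arS2 (n := #|T|) Hk ltac:(by rewrite -Hs2') Hv1 Hv2.
      rewrite (_ : #|T| - 2 = #|Uj 0|); last by rewrite HN Hs2'.
      by case: (_ != 0); lia.
    by move: Hwrap; rewrite Hrs; case: (_ != 0); lia.
case: (boolP ((#|Uj 0| %% k + 2 <= k) || (nbU e (Uj 0) (P 0) == 0))) => Hcond.
  apply: (routeB (rho := size p %% k)) => //.
  - by rewrite Hrho.
  - exact: mod_sub_rho.
  - rewrite (negbTE Hrs) addn0.
    case/orP: Hcond => [H|/eqP ->]; first by case: (_ != 0) => /=; lia.
    by rewrite eqxx addn0; move: Hr0k; clear; lia.
move: Hcond; rewrite negb_or -ltnNge => /andP[Hr0 Hal].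
have Hr0' : #|Uj 0| %% k = k.-1 by lia.
have Hrho1 : size p %% k = 1 by lia.
have Hks := arRho Hk Hs2 Hrho1.
apply: routeD => //.
case: Hcase => [Hi|[Hii|[Hiii|[Hiv|[Hv|Hvi]]]]].
- by exfalso; apply: (Hnoti (Hα Hal)).
- lia.
- case: (leqP 4 k) => // Hk3; apply/orP; right; lia.
- by move: Hiv => /and3P[/eqP Hs _ _]; lia.
- by move: Hv => /and3P[/eqP Hs _ _]; lia.
- move: Hvi => /and3P[/eqP Hs4 /eqP Hk3 H3].
  exfalso; have := arS4 (n := #|T|) ltac:(by rewrite -Hs4) H3.
  rewrite (_ : #|T| - 4 = #|Uj 0|); last by rewrite HN Hs4.
  by rewrite Hk3 in Hr0'; rewrite Hr0'.
Qed.

End Plan.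

Unset Implicit Arguments.

Theorem corollary4p5 (T C : finType) (e : rel T) (k : nat) (L : T -> {set C})
  (S : {set T}) (r : T) :
  3 <= k -> simple_graph e -> list_assignment k L ->
  bug e S r -> deg e r = 2 ->
  let n := #|T| in
  (forall x y, x \in S -> y \notin S -> ~~ e x y) \/
  (3 <= #|S| <= k) \/
  (5 <= #|S|) \/
  [&& #|S| == 1, n %% k != 0 & (n + 1) %% k != 0] \/
  [&& #|S| == 2, n %% k != 0 & n %% k != 1] \/
  [&& #|S| == 4, k == 3 & n %% 3 != 0] ->
  safe e k L S.
Proof.
move=> Hk Hg HLk Hbug Hdr n Hcase.
have Hg' := Hg; case: Hg' => Hsym Hirr.
case: Hbug => HrS Hcon Hb3.
have Hdeg : forall v, v \in S -> deg e v <= 2.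
  move=> v Hv; rewrite leqNgt; apply/negP => H3.
  have Evr := Hb3 v Hv H3; move: H3; rewrite Evr Hdr.
  by [].
have [p [Hu HpS Hsz Hadj]] := ham_path Hsym Hdeg Hcon HrS.
have [c0 _] : exists c0 : C, c0 \in L r.
  by apply/card_gt0P; rewrite HLk; apply: leq_trans Hk.
move=> f Hf.
have HU0 : Uj S p 0 = ~: S by apply: Uj0.
rewrite -HU0 in Hf.
have Hnb : #|S| <= 2 -> exists x u, [/\ x \in S, u \notin S & e x u].
  move=> HS2; exists r.
  have : ~~ ([set u | e r u] \subset S :\ r).
    apply/negP => Hsub; have H1 := subset_leq_card Hsub.
    have E1 := cardsD1 r S; rewrite HrS in E1.
    have Hd : #|[set u | e r u]| = 2 := Hdr.
    by move: H1 Hd E1 HS2; clear; lia.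
  case/subsetPn=> u; rewrite !inE negb_and negbK => Hru /orP[/eqP Eur|HuS].
    by rewrite Eur Hirr in Hru.
  by exists u; split.
have HS0 : 0 < #|S| by apply/card_gt0P; exists r.
have Hadj' : forall i, i.+1 < size p -> e (P p r i) (P p r i.+1).
  by move=> i Hi; apply: Hadj.
have [g [Hg1 Hg2]] := plan_main (x0 := r) Hk Hg HLk Hu HpS Hsz Hdeg Hadj' c0 HS0 Hcase Hnb Hf.
exists g; split => // v Hv; apply: Hg2.
by rewrite HU0 inE.
Qed.
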